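(* Let $q$ be a prime power and $\mathcal{L}$ a non-empty set of lines of $\mathrm{PG}(n,q)$ satisfying (Pt), (Pl), (Sd) and (To) (see context). Let $M$ be a subspace of $\mathrm{PG}(n,q)$, and let $\ell\in\mathcal{L}\setminus\mathcal{L}_M$ be a line that meets a line $s\in\mathcal{L}_M$. Then: (a) $s$ is the only line of $\mathcal{L}_M$ meeting $\ell$. (b) If $\ell^M\in\mathcal{L}_M$ meets $s$ in exactly one point, then $\mathcal{L}_{\langle \ell^M,\ell\rangle}=\mathcal{L}_{\langle \ell^M,s\rangle}\cup\mathcal{L}_{\langle s,\ell\rangle}$. (c) If $\ell^M_1,\ell^M_2\in\mathcal{L}_M$ meet $s$ in exactly one point $P$, resp. $Q$, then $\mathcal{L}_{\langle \ell^M_1,\ell\rangle}\cap\mathcal{L}_{\langle \ell^M_2,\ell\rangle}=\mathcal{L}_{\langle \ell^M_1,\ell\rangle}$ if $P=Q$, and $=\mathcal{L}_{\langle s,\ell\rangle}$ if $P\ne Q$. (d) If $\ell^M_1\in\mathcal{L}_M$ meets $s$ in exactly one point and $\ell^M_2\in\mathcal{L}_M$ is disjoint from $s$, then $\mathcal{L}_{\langle \ell^M_1,\ell\rangle}\cap\mathcal{L}_{\langle \ell^M_2,\ell\rangle}=\{\ell\}$.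
   Context: (Pt): every point of $\mathrm{PG}(n,q)$ lies on $0$ or $q+1$ lines of $\mathcal{L}$. (Pl): every plane contains $0$, $1$ or $q+1$ lines of $\mathcal{L}$. (Sd): every solid ($3$-dimensional subspace) contains $0$, $1$, $q+1$ or $2q+1$ lines of $\mathcal{L}$. (To): $|\mathcal{L}|\le q^5+q^4+q^3+q^2+q+1$. For a subspace $W$, $\mathcal{L}_W$ denotes the set of lines of $\mathcal{L}$ contained in $W$; $\langle X,Y\rangle$ denotes the subspace spanned by $X$ and $Y$. *)

(* Defs.v *)
From HB Require Import structures.
From mathcomp Require Import all_boot all_order all_algebra all_field.
Set Implicit Arguments. Unset Strict Implicit. Unset Printing Implicit Defensive.
Import GRing.Theory.
Local Open Scope ring_scope.

(* PG(n,q): subspaces of the vector space F^(n+1), F a finite field with q elements.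
   A projective subspace of projective dimension k is a vector subspace of
   dimension k+1. *)
Definition PGspace (F : finFieldType) (n : nat) := {vspace 'rV[F]_(n.+1)}.

Section PG.
Variables (F : finFieldType) (n : nat).
Local Notation V := (PGspace F n).

Definition is_point (P : V) := \dim P == 1%N.
Definition is_line (l : V) := \dim l == 2%N.
Definition is_plane (p : V) := \dim p == 3%N.
Definition is_solid (S : V) := \dim S == 4%N.

Definition meet (U W : V) := (U :&: W)%VS != 0%VS.

Definition LW (L : seq V) (W : V) : seq V := [seq l <- L | (l <= W)%VS].

Definition prop_Pt (q : nat) (L : seq V) :=
  forall P : V, is_point P ->
    count (fun l => (P <= l)%VS) L \in [:: 0%N; q.+1].
Definition prop_Pl (q : nat) (L : seq V) :=
  forall p : V, is_plane p -> size (LW L p) \in [:: 0%N; 1%N; q.+1].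
Definition prop_Sd (q : nat) (L : seq V) :=
  forall S : V, is_solid S -> size (LW L S) \in [:: 0%N; 1%N; q.+1; (2 * q).+1].
Definition prop_To (q : nat) (L : seq V) :=
  (size L <= q ^ 5 + q ^ 4 + q ^ 3 + q ^ 2 + q + 1)%N.

Definition good_line_set (q : nat) (L : seq V) :=
  [/\ L != [::], uniq L & all is_line L] /\
  [/\ prop_Pt q L, prop_Pl q L, prop_Sd q L & prop_To q L].
End PG.

(* Main.v *)
Require Import Defs.
From HB Require Import structures.
From mathcomp Require Import all_boot all_order all_algebra all_field.
From mathcomp Require Import zify.
Import GRing.Theory.
Set Implicit Arguments. Unset Strict Implicit. Unset Printing Implicit Defensive.

Lemma G_eq (K : fieldType) (vT : vectType K) (U W : {vspace vT}) :
  (U <= W)%VS -> (\dim W <= \dim U)%N -> U = W.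
Proof. by move=> h1 h2; apply/eqP; rewrite eqEdim h1 h2. Qed.

Lemma G_nz (K : fieldType) (vT : vectType K) (Z U : {vspace vT}) :
  Z != 0%VS -> (Z <= U)%VS -> U != 0%VS.
Proof.
move=> hZ hZU; apply/negP=> /eqP U0; move: hZU; rewrite U0 subv0.
by rewrite (negbTE hZ).
Qed.

Lemma G_dim_pos (K : fieldType) (vT : vectType K) (U : {vspace vT}) :
  U != 0%VS -> (0 < \dim U)%N.
Proof. by rewrite -dimv_eq0 lt0n. Qed.

Lemma G_cap_le1 (K : fieldType) (vT : vectType K) (a b : {vspace vT}) :
  \dim a = 2 -> \dim b = 2 -> a != b -> (\dim (a :&: b) <= 1)%N.
Proof.
move=> da db ab; have := dimvS (capvSl a b); rewrite da leq_eqVlt ltnS.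
case/orP=> // /eqP h.
have e1 : (a :&: b)%VS = a by apply: G_eq; rewrite ?capvSl ?da ?h.
have e2 : (a :&: b)%VS = b by apply: G_eq; rewrite ?capvSr ?db ?h.
by rewrite -e1 e2 eqxx in ab.
Qed.

Lemma G_cap1 (K : fieldType) (vT : vectType K) (a b : {vspace vT}) :
  \dim a = 2 -> \dim b = 2 -> a != b -> (a :&: b)%VS != 0%VS ->
  \dim (a :&: b) = 1.
Proof.
move=> da db ab nz; have := G_cap_le1 da db ab; have := G_dim_pos nz.
lia.
Qed.

Lemma G_sum3 (K : fieldType) (vT : vectType K) (a b : {vspace vT}) :
  \dim a = 2 -> \dim b = 2 -> \dim (a :&: b) = 1 -> \dim (a + b) = 3.
Proof. move=> da db dc; have := dimv_sum_cap a b; rewrite da db dc; lia. Qed.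

Lemma G_lines (K : fieldType) (vT : vectType K) (x y : {vspace vT}) :
  \dim x = 2 -> \dim y = 2 -> (x <= y)%VS -> x = y.
Proof. by move=> dx dy h; apply: G_eq; rewrite ?dx ?dy. Qed.

Lemma G_two_planes (K : fieldType) (vT : vectType K) (x b W1 W2 : {vspace vT}) :
  \dim x = 2 -> \dim b = 2 -> \dim W1 = 3 -> \dim W2 = 3 -> W1 != W2 ->
  (x <= W1)%VS -> (x <= W2)%VS -> (b <= W1)%VS -> (b <= W2)%VS -> x = b.
Proof.
move=> dx db d1 d2 W12 x1 x2 b1 b2.
have hc : (\dim (W1 :&: W2) <= 2)%N.
  have := dimvS (capvSl W1 W2); rewrite d1 leq_eqVlt ltnS.
  case/orP=> // /eqP h.
  have e1 : (W1 :&: W2)%VS = W1 by apply: G_eq; rewrite ?capvSl ?d1 ?h.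
  have e2 : (W1 :&: W2)%VS = W2 by apply: G_eq; rewrite ?capvSr ?d2 ?h.
  by rewrite -e1 e2 eqxx in W12.
have xc : (x <= W1 :&: W2)%VS by rewrite subv_cap x1 x2.
have bc : (b <= W1 :&: W2)%VS by rewrite subv_cap b1 b2.
have ex : x = (W1 :&: W2)%VS by apply: G_eq; rewrite ?dx.
have eb : b = (W1 :&: W2)%VS by apply: G_eq; rewrite ?db.
by rewrite ex eb.
Qed.

Lemma sub_in_count (T : eqType) (a1 a2 : pred T) (s : seq T) :
  {in s, forall x, a1 x -> a2 x} -> (count a1 s <= count a2 s)%N.
Proof.
elim: s => //= y s IH h.
have h' : {in s, forall x, a1 x -> a2 x}.
  by move=> x xs; apply: h; rewrite inE xs orbT.
have := IH h'; case E: (a1 y) => /=.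
  by rewrite (h y (mem_head _ _) E) /= ltnS.
move=> H; apply: leq_trans H _; exact: leq_addl.
Qed.

Lemma lineL (F : finFieldType) (n : nat) (L : seq (PGspace F n)) x :
  all (@is_line F n) L -> x \in L -> \dim x = 2.
Proof. by move=> /allP h /h /eqP. Qed.

Lemma plane_cnt (F : finFieldType) (n q : nat) (L : seq (PGspace F n)) (p a b : PGspace F n) :
  prop_Pl q L -> \dim p = 3 -> a \in L -> b \in L -> a != b ->
  (a <= p)%VS -> (b <= p)%VS -> count (fun x => (x <= p)%VS) L = q.+1.
Proof.
move=> hPl dp aL bL ab ap bp.
have h2 : (2 <= size (LW L p))%N.
  have -> : 2 = size [:: a; b] by [].
  apply: uniq_leq_size; first by rewrite /= inE ab.
  by move=> y; rewrite !inE => /orP [] /eqP ->; rewrite mem_filter ?ap ?bp ?aL ?bL.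
have := hPl p (introT eqP dp); move: h2; rewrite /LW size_filter.
by rewrite !inE => h /or3P [] /eqP E; rewrite E in h *.
Qed.

Lemma solid_bnd (F : finFieldType) (n q : nat) (L : seq (PGspace F n)) (S : PGspace F n) :
  prop_Sd q L -> \dim S = 4 -> (count (fun x => (x <= S)%VS) L <= (2 * q).+1)%N.
Proof.
move=> hSd dS; have := hSd S (introT eqP dS); rewrite /LW size_filter.
rewrite !inE => /or4P [] /eqP ->; lia.
Qed.

Lemma tight (F : finFieldType) (n q : nat) (L : seq (PGspace F n))
  (S W1 W2 a b c x : PGspace F n) :
  uniq L -> all (@is_line F n) L -> prop_Pl q L -> prop_Sd q L ->
  \dim S = 4 -> (W1 <= S)%VS -> (W2 <= S)%VS -> \dim W1 = 3 -> \dim W2 = 3 ->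
  W1 != W2 -> a \in L -> b \in L -> c \in L -> a != b -> b != c ->
  (a <= W1)%VS -> (b <= W1)%VS -> (b <= W2)%VS -> (c <= W2)%VS ->
  x \in L -> (x <= S)%VS -> (x <= W1)%VS || (x <= W2)%VS.
Proof.
move=> hu hall hPl hSd dS W1S W2S d1 d2 W12 aL bL cL ab bc a1 b1 b2 c2 xL xS.
apply/negPn/negP => hx.
set A := (fun y : PGspace F n => (y <= W1)%VS).
set B := (fun y : PGspace F n => (y <= W2)%VS).
have cA : count A L = q.+1 by apply: (plane_cnt hPl d1 aL bL ab).
have cB : count B L = q.+1 by apply: (plane_cnt hPl d2 bL cL bc).
have cI : count (predI A B) L = 1.
  rewrite (@eq_in_count _ _ (pred1 b)); first by rewrite count_uniq_mem // bL.
  move=> y yL /=; rewrite /A /B; apply/andP/eqP => [[y1 y2]|->]; last by rewrite b1 b2.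
  exact: (G_two_planes (lineL hall yL) (lineL hall bL) d1 d2 W12).
have cU := count_predUI A B L; rewrite cA cB cI in cU.
have cI2 : count (predI (predU A B) (pred1 x)) L = 0.
  have : (count (predI (predU A B) (pred1 x)) L <= count pred0 L)%N.
    apply: sub_count => y /=.
    by case/andP=> h /eqP E; rewrite E in h; rewrite h in hx.
  by rewrite count_pred0 leqn0 => /eqP.
have cU2 := count_predUI (predU A B) (pred1 x) L.
rewrite cI2 count_uniq_mem // xL in cU2.
have hS := solid_bnd hSd dS.
have H : (count (predU (predU A B) (pred1 x)) L <= count (fun y => (y <= S)%VS) L)%N.
  apply: sub_count => y /= /orP [/orP [h|h]|/eqP ->] //.
    exact: subv_trans h W1S.
  exact: subv_trans h W2S.
move: (leq_trans H hS) cU cU2 cI2.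
move: (count (predU (predU A B) (pred1 x)) L) (count (predU A B) L)
  (count (predI (predU A B) (pred1 x)) L) => u v w.
clear; lia.
Qed.

Lemma concur (F : finFieldType) (n q : nat) (L : seq (PGspace F n))
  (a b c Z : PGspace F n) :
  (1 < q)%N -> uniq L -> all (@is_line F n) L -> prop_Pl q L -> prop_Sd q L ->
  a \in L -> b \in L -> c \in L -> a != b -> a != c -> b != c ->
  Z != 0%VS -> (Z <= a)%VS -> (Z <= b)%VS -> (Z <= c)%VS -> (c <= a + b)%VS.
Proof.
move=> hq hu hall hPl hSd aL bL cL ab ac bc Z0 Za Zb Zc.
apply/negPn/negP => nc.
have da := lineL hall aL; have db := lineL hall bL; have dc := lineL hall cL.
have nzab : (a :&: b)%VS != 0%VS by apply: (G_nz Z0); rewrite subv_cap Za Zb.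
have nzac : (a :&: c)%VS != 0%VS by apply: (G_nz Z0); rewrite subv_cap Za Zc.
have nzbc : (b :&: c)%VS != 0%VS by apply: (G_nz Z0); rewrite subv_cap Zb Zc.
have d1 := G_sum3 da db (G_cap1 da db ab nzab).
have d2 := G_sum3 da dc (G_cap1 da dc ac nzac).
have d3 := G_sum3 db dc (G_cap1 db dc bc nzbc).
set W1 := (a + b)%VS; set W2 := (a + c)%VS; set W3 := (b + c)%VS.
set S := (W1 + c)%VS.
have dW1c : \dim (W1 :&: c) = 1.
  have nz : (W1 :&: c)%VS != 0%VS.
    by apply: (G_nz Z0); rewrite subv_cap Zc (subv_trans Za (addvSl _ _)).
  have := G_dim_pos nz; have := dimvS (capvSr W1 c); rewrite dc leq_eqVlt ltnS.
  case/orP => [/eqP h|]; last by move=> h1 h2; move: h1 h2; clear; lia.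
  have e : (W1 :&: c)%VS = c by apply: G_eq; rewrite ?capvSr ?dc ?h.
  by move: (capvSl W1 c); rewrite e (negbTE nc).
have dS : \dim S = 4.
  by rewrite /S; have := dimv_sum_cap W1 c; rewrite d1 dc dW1c; clear; lia.
have aS : (a <= S)%VS by apply: subv_trans (addvSl _ _) (addvSl _ _).
have bS : (b <= S)%VS by apply: subv_trans (addvSr _ _) (addvSl _ _).
have cS : (c <= S)%VS by apply: addvSr.
have W1S : (W1 <= S)%VS by apply: addvSl.
have W2S : (W2 <= S)%VS by rewrite subv_add aS cS.
have W3S : (W3 <= S)%VS by rewrite subv_add bS cS.
have cW2 : (c <= W2)%VS by apply: addvSr.
have cW3 : (c <= W3)%VS by apply: addvSr.
have W12 : W1 != W2 by apply/eqP => E; move: cW2; rewrite -E (negbTE nc).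
have W13 : W1 != W3 by apply/eqP => E; move: cW3; rewrite -E (negbTE nc).
have W23 : W2 != W3.
  apply/eqP => E.
  have bW2 : (b <= W2)%VS by rewrite E addvSl.
  have e : W1 = W2.
    by apply: G_eq; rewrite ?d1 ?d2 // subv_add addvSl bW2.
  by rewrite e eqxx in W12.
have c3 : count (fun x => (x <= W3)%VS) L = q.+1.
  by apply: (plane_cnt hPl d3 bL cL bc); rewrite ?addvSl ?addvSr.
have : (size (LW L W3) <= size [:: b; c])%N.
  apply: uniq_leq_size; first exact: filter_uniq.
  move=> y; rewrite mem_filter => /andP [yW3 yL].
  have dy := lineL hall yL.
  have yS : (y <= S)%VS by apply: subv_trans yW3 W3S.
  have ba : b != a by rewrite eq_sym.
  have := tight hu hall hPl hSd dS W1S W2S d1 d2 W12 bL aL cL ba ac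
     (addvSr _ _) (addvSl _ _) (addvSl _ _) cW2 yL yS.
  case/orP => [yW1|yW2].
  - rewrite (G_two_planes dy db d1 d3 W13 yW1 yW3 (addvSr _ _) (addvSl _ _)).
    by rewrite mem_head.
  - rewrite (G_two_planes dy dc d2 d3 W23 yW2 yW3 cW2 cW3).
    by rewrite !inE eqxx orbT.
rewrite /LW size_filter c3 /=; move: hq; clear; lia.
Qed.

Local Open Scope ring_scope.

Theorem lemma5 (F : finFieldType) (n q : nat) (L : seq (PGspace F n))
  (hq : #|F| = q) (hL : good_line_set q L)
  (M l s : PGspace F n)
  (hl : l \in L) (hlM : ~~ (l <= M)%VS)
  (hs : s \in L) (hsM : (s <= M)%VS) (hls : meet l s) :
  [/\
   (* (a) *)
   (forall t, t \in LW L M -> meet t l -> t = s),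
   (* (b) *)
   (forall lM, lM \in LW L M -> \dim (lM :&: s)%VS = 1%N ->
      LW L (lM + l)%VS =i LW L (lM + s)%VS ++ LW L (s + l)%VS),
   (* (c) *)
   (forall l1 l2, l1 \in LW L M -> l2 \in LW L M ->
      \dim (l1 :&: s)%VS = 1%N -> \dim (l2 :&: s)%VS = 1%N ->
      (forall x, (x \in LW L (l1 + l)%VS) && (x \in LW L (l2 + l)%VS) =
         (x \in (if (l1 :&: s)%VS == (l2 :&: s)%VS
                 then LW L (l1 + l)%VS else LW L (s + l)%VS))))
  & (* (d) *)
   (forall l1 l2, l1 \in LW L M -> l2 \in LW L M ->
      \dim (l1 :&: s)%VS = 1%N -> ~~ meet l2 s ->
      (forall x, (x \in LW L (l1 + l)%VS) && (x \in LW L (l2 + l)%VS) = (x == l)))].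
Proof.
case: hL => [[_ hu hall] [hPt hPl hSd _]].
have q2 : (1 < q)%N.
  rewrite -hq; apply/card_gt1P; exists 0, 1; split => //.
  by rewrite eq_sym oner_neq0.
have dl := lineL hall hl; have ds := lineL hall hs.
have hsl : l != s by apply/eqP => E; rewrite E hsM in hlM.
set X := (l :&: s)%VS.
have dX : \dim X = 1%N by apply: G_cap1.
have X0 : X != 0%VS by rewrite -dimv_eq0 dX.
have Xl : (X <= l)%VS by apply: capvSl.
have Xs : (X <= s)%VS by apply: capvSr.
have XM : (X <= M)%VS by apply: subv_trans Xs hsM.
have lMX : (l :&: M)%VS = X.
  apply/esym/G_eq; first by rewrite subv_cap Xl XM.
  rewrite dX; have := dimvS (capvSl l M); rewrite dl leq_eqVlt ltnS.
  case/orP=> // /eqP h.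
  have e : (l :&: M)%VS = l by apply: G_eq; rewrite ?capvSl ?dl ?h.
  by move: (capvSr l M); rewrite e (negbTE hlM).
have keyM : forall t, (t <= M)%VS -> (t :&: l <= X)%VS.
  move=> t tM; rewrite -lMX subv_cap capvSr /=.
  exact: subv_trans (capvSl _ _) tM.
have ha : forall t, t \in L -> (t <= M)%VS -> (t :&: l)%VS != 0%VS -> t = s.
  move=> t tL tM nz; apply/eqP/negPn/negP => ts.
  have dt := lineL hall tL.
  have tl : t != l by apply/eqP => E; rewrite -E tM in hlM.
  have e : (t :&: l)%VS = X.
    apply: G_eq; first exact: keyM.
    by rewrite dX; apply: G_dim_pos.
  have Xt : (X <= t)%VS by rewrite -e capvSl.
  have sl : s != l by rewrite eq_sym.
  have h := concur q2 hu hall hPl hSd tL hs hl ts tl sl X0 Xt Xs Xl.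
  have tsM : (t + s <= M)%VS by rewrite subv_add tM hsM.
  by rewrite (subv_trans h tsM) in hlM.
have hb : forall lM, lM \in L -> (lM <= M)%VS -> \dim (lM :&: s) = 1%N ->
  [/\ (s <= lM + l)%VS, (lM + s <= M)%VS &
     forall x, x \in L -> (x <= lM + l)%VS = (x <= lM + s)%VS || (x <= s + l)%VS].
  move=> lM lML lMM dP.
  have dlM := lineL hall lML.
  have lMs : lM != s by apply/eqP => E; rewrite E capvv ds in dP.
  have lMl0 : (lM :&: l)%VS = 0%VS.
    apply/eqP/negPn/negP => nz.
    by rewrite (ha lM lML lMM nz) eqxx in lMs.
  set P := (lM :&: s)%VS.
  have PX : P != X.
    apply/eqP => E.
    have XlM : (X <= lM)%VS by rewrite -E capvSl.
    have : (X <= lM :&: l)%VS by rewrite subv_cap XlM Xl.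
    by rewrite lMl0 subv0 (negbTE X0).
  have dPX : \dim (P :&: X) = 0%N.
    have := dimvS (capvSl P X); rewrite dP leq_eqVlt ltnS leqn0.
    case/orP=> /eqP h //; exfalso.
    have e1 : (P :&: X)%VS = P by apply: G_eq; rewrite ?capvSl ?dP ?h.
    have e2 : (P :&: X)%VS = X by apply: G_eq; rewrite ?capvSr ?dX ?h.
    by rewrite -e1 e2 eqxx in PX.
  have dPX2 : \dim (P + X) = 2%N.
    by have := dimv_sum_cap P X; rewrite dP dX dPX; clear; lia.
  have sPX : (P + X)%VS = s.
    by apply: G_eq; rewrite ?subv_add ?capvSr ?Xs ?ds ?dPX2.
  have sS : (s <= lM + l)%VS.
    rewrite -sPX subv_add; apply/andP; split.
      exact: subv_trans (capvSl _ _) (addvSl _ _).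
    exact: subv_trans Xl (addvSr _ _).
  have dS : \dim (lM + l) = 4%N.
    by have := dimv_sum_cap lM l; rewrite lMl0 dimv0 dlM dl; clear; lia.
  have d1 : \dim (lM + s) = 3%N := G_sum3 dlM ds dP.
  have d2 : \dim (s + l) = 3%N by apply: G_sum3 => //; rewrite capvC.
  have W1S : (lM + s <= lM + l)%VS by rewrite subv_add addvSl sS.
  have W2S : (s + l <= lM + l)%VS by rewrite subv_add sS addvSr.
  have W1M : (lM + s <= M)%VS by rewrite subv_add lMM hsM.
  have W12 : (lM + s)%VS != (s + l)%VS.
    apply/eqP=> E; have : (l <= lM + s)%VS by rewrite E addvSr.
    by move=> h; rewrite (subv_trans h W1M) in hlM.
  have sl : s != l by rewrite eq_sym.
  split => // x xL; apply/idP/idP.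
  - move=> xS.
    exact: (tight hu hall hPl hSd dS W1S W2S d1 d2 W12 lML hs hl lMs sl
      (addvSl _ _) (addvSr _ _) (addvSl _ _) (addvSr _ _) xL xS).
  - by case/orP => h; [exact: subv_trans h W1S | exact: subv_trans h W2S].
split.
- by move=> t; rewrite mem_filter => /andP [tM tL]; apply: ha.
- move=> lM; rewrite mem_filter => /andP [lMM lML] dP x.
  rewrite mem_cat !mem_filter.
  case xL: (x \in L); last by rewrite !andbF.
  rewrite !andbT; have [_ _ h] := hb lM lML lMM dP; exact: h.
- move=> l1 l2; rewrite !mem_filter => /andP [l1M l1L] /andP [l2M l2L] d1s d2s x.
  have [s1 W1M hb1] := hb l1 l1L l1M d1s.
  have [s2 W2M hb2] := hb l2 l2L l2M d2s.
  have dl1 := lineL hall l1L; have dl2 := lineL hall l2L.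
  have l1s : l1 != s by apply/eqP => E; rewrite E capvv ds in d1s.
  have l2s : l2 != s by apply/eqP => E; rewrite E capvv ds in d2s.
  have sl1 : s != l1 by rewrite eq_sym.
  have dp1 : \dim (l1 + s) = 3%N := G_sum3 dl1 ds d1s.
  have dp2 : \dim (l2 + s) = 3%N := G_sum3 dl2 ds d2s.
  case: ifP => [/eqP E | /negbT NE]; rewrite !mem_filter;
    (case xL: (x \in L); last by rewrite !andbF); rewrite !andbT (hb1 x xL) (hb2 x xL).
  + have sub : (l1 + s <= l2 + s)%VS.
      rewrite subv_add addvSr andbT.
      case: (eqVneq l1 l2) => [->|l12]; first exact: addvSl.
      have P0 : (l1 :&: s)%VS != 0%VS by rewrite -dimv_eq0 d1s.
      have Pl2 : (l1 :&: s <= l2)%VS by rewrite E capvSl.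
      have l21 : l2 != l1 by rewrite eq_sym.
      have h := concur q2 hu hall hPl hSd l2L hs l1L l2s l21 sl1 P0 Pl2
        (capvSr _ _) (capvSl _ _).
      exact: h.
    case: (boolP (x <= l1 + s)%VS) => hA /=.
      by rewrite (subv_trans hA sub).
    by case: (x <= s + l)%VS; rewrite ?orbT.
  + have key : (x <= l1 + s)%VS -> (x <= l2 + s)%VS -> x = s.
      move=> hA hB; have dx := lineL hall xL.
      case: (eqVneq (l1 + s)%VS (l2 + s)%VS) => [Epl|Npl]; last first.
        exact: (G_two_planes dx ds dp1 dp2 Npl hA hB (addvSr _ _) (addvSr _ _)).
      exfalso.
      have l12 : l1 != l2 by apply/eqP => E; rewrite E eqxx in NE.
      have l2pi : (l2 <= l1 + s)%VS by rewrite Epl addvSl.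
      set pi := (l1 + s)%VS in dp1 l2pi hA Epl.
      set R := (l1 :&: l2)%VS.
      have l12pi : (l1 + l2 <= pi)%VS by rewrite subv_add addvSl l2pi.
      have R0 : R != 0%VS.
        rewrite -dimv_eq0 -lt0n.
        have := dimv_sum_cap l1 l2; have := dimvS l12pi.
        rewrite dp1 dl1 dl2 /R; move: (\dim (l1 + l2)) (\dim (l1 :&: l2)) => u v.
        clear; lia.
      have dR : \dim R = 1%N by apply: G_cap1.
      have Rl1 : (R <= l1)%VS by apply: capvSl.
      have Rl2 : (R <= l2)%VS by apply: capvSr.
      have cR : count (fun y => (R <= y)%VS) L = q.+1.
        have := hPt R (introT eqP dR); rewrite !inE => /orP [/eqP h|/eqP //].
        have : has (fun y => (R <= y)%VS) L by apply/hasP; exists l1.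
        by rewrite has_count h.
      have Rs : ~~ (R <= s)%VS.
        apply/negP => Rs.
        have e1 : R = (l1 :&: s)%VS by apply: G_eq; rewrite ?subv_cap ?Rl1 ?Rs ?dR ?d1s.
        have e2 : R = (l2 :&: s)%VS by apply: G_eq; rewrite ?subv_cap ?Rl2 ?Rs ?dR ?d2s.
        by rewrite -e1 -e2 eqxx in NE.
      have cpi : count (fun y => (y <= pi)%VS) L = q.+1.
        by apply: (plane_cnt hPl dp1 l1L hs l1s); rewrite ?addvSl ?addvSr.
      have H : (count (predU (fun y => (R <= y)%VS) (pred1 s)) L <=
                count (fun y => (y <= pi)%VS) L)%N.
        apply: sub_in_count => y yL /= /orP [Ry|/eqP ->]; last exact: addvSr.
        case: (eqVneq y l1) => [->|yl1]; first exact: addvSl.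
        case: (eqVneq y l2) => [->|yl2]; first exact: l2pi.
        have l1y : l1 != y by rewrite eq_sym.
        have l2y : l2 != y by rewrite eq_sym.
        have h := concur q2 hu hall hPl hSd l1L l2L yL l12 l1y l2y R0 Rl1 Rl2 Ry.
        exact: subv_trans h l12pi.
      have cI : count (predI (fun y => (R <= y)%VS) (pred1 s)) L = 0%N.
        have : (count (predI (fun y => (R <= y)%VS) (pred1 s)) L <= count pred0 L)%N.
          apply: sub_count => y /= /andP [Ry /eqP E].
          by rewrite E in Ry; rewrite Ry in Rs.
        by rewrite count_pred0 leqn0 => /eqP.
      have cU := count_predUI (fun y => (R <= y)%VS) (pred1 s) L.
      rewrite cI cR count_uniq_mem // hs in cU.
      move: H cU cpi.
      move: (count (predU (fun y => (R <= y)%VS) (pred1 s)) L)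
            (count (fun y => (y <= pi)%VS) L) => u v.
      clear; lia.
    case hC: (x <= s + l)%VS; first by rewrite !orbT.
    rewrite !orbF; apply/negP => /andP [hA hB].
    by move: hC; rewrite (key hA hB) addvSl.
- move=> l1 l2; rewrite !mem_filter => /andP [l1M l1L] /andP [l2M l2L] d1s nm x.
  have [s1 W1M hb1] := hb l1 l1L l1M d1s.
  have dl1 := lineL hall l1L; have dl2 := lineL hall l2L.
  have dp1 : \dim (l1 + s) = 3%N := G_sum3 dl1 ds d1s.
  rewrite /meet negbK in nm.
  case: (eqVneq x l) => [->|xl]; first by rewrite !mem_filter (addvSr l1 l) (addvSr l2 l) hl.
  rewrite !mem_filter.
  apply/negP => /andP [/andP [xS1 xL] /andP [xT _]].
  have dx := lineL hall xL.
  set T := (l2 + l)%VS in xT.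
  have sT : ~~ (s <= T)%VS.
    apply/negP => sT.
    have d2s : \dim (l2 + s) = 4%N.
      by have := dimv_sum_cap l2 s; rewrite (eqP nm) dimv0 dl2 ds; clear; lia.
    have dT : (\dim T <= 4)%N.
      by have := dimv_sum_cap l2 l; rewrite /T dl2 dl; move: (\dim (l2 + l)) => u; clear; lia.
    have e : (l2 + s)%VS = T by apply: G_eq; rewrite ?subv_add ?addvSl ?sT ?d2s.
    have : (l <= l2 + s)%VS by rewrite e /T addvSr.
    by move=> h; rewrite (subv_trans h (_ : l2 + s <= M)%VS) ?subv_add ?l2M ?hsM in hlM.
  move: xS1; rewrite hb1 // => /orP [xA|xC].
  - case: (eqVneq x s) => [Exs|xs]; first by rewrite Exs in xT; rewrite xT in sT.
    have xs0 : (x :&: s)%VS != 0%VS.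
      rewrite -dimv_eq0 -lt0n.
      have hsub : (x + s <= l1 + s)%VS by rewrite subv_add xA addvSr.
      have := dimv_sum_cap x s; have := dimvS hsub.
      rewrite dp1 dx ds; move: (\dim (x + s)) (\dim (x :&: s)) => u v.
      clear; lia.
    have XT : (X <= T)%VS by rewrite /T (subv_trans Xl (addvSr _ _)).
    have Ts : X = (T :&: s)%VS.
      apply: G_eq; first by rewrite subv_cap XT Xs.
      rewrite dX; have := dimvS (capvSr T s); rewrite ds leq_eqVlt ltnS.
      case/orP=> // /eqP h.
      have e : (T :&: s)%VS = s by apply: G_eq; rewrite ?capvSr ?ds ?h.
      by move: (capvSl T s); rewrite e (negbTE sT).
    have xsX : (x :&: s <= X)%VS.
      by rewrite Ts subv_cap capvSr (subv_trans (capvSl _ _) xT).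
    have xl0 : (x :&: l)%VS != 0%VS.
      by apply: (G_nz xs0); rewrite subv_cap capvSl (subv_trans xsX Xl).
    have xM : (x <= M)%VS by apply: subv_trans xA W1M.
    by rewrite (ha x xL xM xl0) eqxx in xs.
  - have d2 : \dim (s + l) = 3%N by apply: G_sum3 => //; rewrite capvC.
    set C := ((s + l) :&: T)%VS.
    have lC : (l <= C)%VS by rewrite subv_cap addvSr /T addvSr.
    have xC' : (x <= C)%VS by rewrite subv_cap xC xT.
    have dC : (\dim C <= 2)%N.
      have := dimvS (capvSl (s + l) T); rewrite d2 leq_eqVlt ltnS.
      case/orP=> // /eqP h.
      have e : C = (s + l)%VS by apply: G_eq; rewrite ?capvSl ?d2 ?h.
      have : (s <= T)%VS.
        by apply: subv_trans (addvSl s l) _; rewrite -e capvSr.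
      by rewrite (negbTE sT).
    have e1 : x = C by apply: G_eq; rewrite ?dx.
    have e2 : l = C by apply: G_eq; rewrite ?dl.
    by rewrite e1 e2 eqxx in xl.
Qed.
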